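(* For every integer $v\ge 1$, with $\partial_z=d/dz$, $$\prod_{n=1}^{v-1}\left(\partial_z^2+4n^2\right)\csc^2 z=(2v-1)!\,\csc^{2v}z .$$ (For $v=1$ the product is empty and the identity reads $\csc^2 z=\csc^2 z$.)
   Context: The identity is between functions of a real (or complex) variable $z$ away from the zeros of $\sin z$. The operators $\partial_z^2+4n^2$ commute, so the order of the product is irrelevant. *)

(* Defs.v *)
From Stdlib Require Import Reals Arith Factorial.
Open Scope R_scope.

Definition dom (z : R) : Prop := sin z <> 0.

Definition csc2 (z : R) : R := / (sin z ^ 2).

Definition second_deriv_on (f h : R -> R) : Prop :=
  exists f' : R -> R, forall x, dom x ->
    derivable_pt_lim f x (f' x) /\ derivable_pt_lim f' x (h x).

Definition op_step (c : R) (f g : R -> R) : Prop :=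
  exists h, second_deriv_on f h /\ forall x, dom x -> g x = h x + c * f x.

(* prod_rel m f g : g = prod_{n=1}^{m} (d^2/dz^2 + 4 n^2) f on dom. *)
Fixpoint prod_rel (m : nat) (f g : R -> R) : Prop :=
  match m with
  | O => forall x, dom x -> g x = f x
  | S k => exists h, prod_rel k f h /\ op_step (4 * INR (S k) ^ 2) h g
  end.

(* Main.v *)
Require Import Defs.
From Stdlib Require Import Reals Arith Factorial Lra Lia.
From Coquelicot Require Import Coquelicot.
Open Scope R_scope.

Definition F (n : nat) z := / sin z ^ n.
Definition F1 (n : nat) z := - INR n * (cos z * F (S n) z).
Definition F2 (n : nat) z := INR n * INR (S n) * F (S (S n)) z - INR n ^ 2 * F n z.

Lemma der_eq (f : R -> R) (x l l2 : R) : is_derive f x l -> l = l2 -> is_derive f x l2.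
Proof. intros H ->; exact H. Qed.

Lemma dF n z : sin z <> 0 -> is_derive (F n) z (F1 n z).
Proof.
  intros H. unfold F1, F.
  assert (Hp : sin z ^ n <> 0) by (apply pow_nonzero; auto).
  eapply der_eq.
  - apply (is_derive_inv (fun t => sin t ^ n)); [| exact Hp].
    apply is_derive_pow. apply is_derive_sin.
  - destruct n.
    + simpl. field. auto.
    + simpl pred.
      assert (Hq : sin z ^ n <> 0) by (apply pow_nonzero; auto).
      replace (sin z ^ S (S n)) with (sin z * sin z * sin z ^ n) by (simpl; ring).
      replace (sin z ^ S n) with (sin z * sin z ^ n) by (simpl; ring).
      field. auto.
Qed.

Lemma dF1 n z : sin z <> 0 -> is_derive (F1 n) z (F2 n z).
Proof.
  intros H. unfold F1, F2.
  eapply der_eq.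
  - apply (is_derive_scal (fun t => cos t * F (S n) t)). apply (is_derive_mult cos (F (S n))).
    + apply is_derive_cos.
    + apply dF; auto.
    + intros; apply Rmult_comm.
  - unfold F1, F. rewrite !S_INR. unfold plus, mult; simpl.
    assert (Hq : sin z ^ n <> 0) by (apply pow_nonzero; auto).
    replace (sin z ^ S (S (S n))) with (sin z * sin z * sin z * sin z ^ n) by (simpl; ring).
    replace (sin z ^ S (S n)) with (sin z * sin z * sin z ^ n) by (simpl; ring).
    replace (sin z ^ S n) with (sin z * sin z ^ n) by (simpl; ring).
    assert (E : cos z * cos z = 1 - sin z * sin z) by (pose proof (sin2_cos2 z); unfold Rsqr in *; lra).
    try rewrite !S_INR.
    transitivity (- INR n * (- sin z * / (sin z * sin z ^ n) + - (INR n + 1) * ((cos z * cos z) * / (sin z * sin z * sin z ^ n)))).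
    { field. auto. }
    rewrite E. field. auto.
Qed.

Lemma loc_dom x : dom x -> locally x dom.
Proof.
  intros H.
  assert (Hc : filterlim sin (locally x) (locally (sin x))).
  { apply (ex_derive_continuous sin x). auto_derive. auto. }
  apply (Hc (fun y => y <> 0)).
  assert (Hp : 0 < Rabs (sin x)) by (apply Rabs_pos_lt; auto).
  exists (mkposreal _ Hp). intros y Hy.
  change (Rabs (y - sin x) < Rabs (sin x)) in Hy.
  intros E. rewrite E in Hy. rewrite Rminus_0_l, Rabs_Ropp in Hy. lra.
Qed.

Lemma uniq_der (f g : R -> R) x l1 l2 : locally x (fun t => f t = g t) ->
  is_derive f x l1 -> is_derive g x l2 -> l1 = l2.
Proof.
  intros Hl H1 H2.
  apply (is_derive_ext_loc f g) in H1; auto.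
  apply is_derive_unique in H1. apply is_derive_unique in H2. congruence.
Qed.

Lemma step c n h h2 : (forall x, dom x -> h x = c * F n x) -> second_deriv_on h h2 ->
  forall x, dom x -> h2 x = c * F2 n x.
Proof.
  intros Hh [f' Hf] x Hx.
  assert (Hf' : forall y, dom y -> f' y = c * F1 n y).
  { intros y Hy. destruct (Hf y Hy) as [H1 _].
    apply (uniq_der h (fun t => c * F n t) y).
    - apply (filter_imp dom); [intros; auto | apply loc_dom; auto].
    - apply is_derive_Reals; auto.
    - apply is_derive_scal. apply dF. auto. }
  destruct (Hf x Hx) as [_ H2].
  apply (uniq_der f' (fun t => c * F1 n t) x).
  - apply (filter_imp dom); [intros; auto | apply loc_dom; auto].
  - apply is_derive_Reals; auto.
  - apply is_derive_scal. apply dF1. auto.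
Qed.

Definition G (k : nat) z := INR (fact (2*k+1)) * F (2*k+2) z.

Lemma alg k x : dom x ->
  G (S k) x = INR (fact (2*k+1)) * F2 (2*k+2) x + 4 * INR (S k) ^ 2 * G k x.
Proof.
  intros Hx. unfold G, F2.
  replace (2 * S k + 1)%nat with (S (S (2*k+1))) by lia.
  replace (2 * S k + 2)%nat with (S (S (2*k+2))) by lia.
  rewrite !fact_simpl, !mult_INR.
  replace (2*k+2)%nat with (S (2*k+1)) by lia.
  rewrite !S_INR, !plus_INR, !mult_INR. simpl INR. ring.
Qed.

Lemma ex k : prod_rel k csc2 (G k).
Proof.
  induction k as [|k IH].
  - simpl. intros x Hx. unfold G, F, csc2. simpl. ring.
  - simpl. exists (G k). split; [exact IH|].
    exists (fun z => INR (fact (2*k+1)) * F2 (2*k+2) z). split.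
    + exists (fun z => INR (fact (2*k+1)) * F1 (2*k+2) z). intros x Hx. split.
      * apply is_derive_Reals. apply is_derive_scal. apply dF. auto.
      * apply is_derive_Reals. apply is_derive_scal. apply dF1. auto.
    + intros x Hx. rewrite <- alg; auto.
Qed.

Lemma uniq k g : prod_rel k csc2 g -> forall x, dom x -> g x = G k x.
Proof.
  revert g. induction k as [|k IH]; intros g Hg x Hx.
  - simpl in Hg. rewrite Hg; auto. unfold G, F, csc2. simpl. ring.
  - destruct Hg as [h [Hh [h2 [Hs Heq]]]].
    rewrite Heq; auto.
    assert (Hh' : forall y, dom y -> h y = INR (fact (2*k+1)) * F (2*k+2) y).
    { intros y Hy. rewrite (IH h Hh y Hy). reflexivity. }
    rewrite (step (INR (fact (2*k+1))) (2*k+2) h h2 Hh' Hs x Hx).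
    rewrite (IH h Hh x Hx). rewrite alg; auto.
Qed.

Theorem mainTheorem1 (v : nat) (hv : (1 <= v)%nat) :
  (exists g : R -> R, prod_rel (v - 1) csc2 g) /\
  (forall g : R -> R, prod_rel (v - 1) csc2 g ->
     forall z : R, sin z <> 0 ->
       g z = INR (fact (2 * v - 1)) * / (sin z ^ (2 * v))).
Proof.
  split.
  - exists (G (v-1)). apply ex.
  - intros g Hg z Hz. rewrite (uniq (v-1) g Hg z Hz). unfold G, F.
    replace (2 * (v-1) + 1)%nat with (2*v-1)%nat by lia.
    replace (2 * (v-1) + 2)%nat with (2*v)%nat by lia. reflexivity.
Qed.
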